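(* Let $D=(V,A)$ be a minimally Steiner rooted $k$-arc-connected $3$-regular directed graph with root $r$ and terminal set $S\subseteq V\setminus\{r\}$, and let $C\subseteq A$ be a directed cycle. For each $s\in S$, let $Q_s\subseteq A$ be an inclusionwise minimal set of arcs that is the arc-disjoint union of $k$ directed $r$-$s$ paths. Then (a) $C\subseteq\bigcup_{s\in S}Q_s$, and (b) $C\setminus Q_s\neq\emptyset$ for all $s\in S$.
   Context: Directed graphs are loopless, parallel arcs allowed. $D$ with root $r$ and terminals $S$ is Steiner rooted $k$-arc-connected if for every $s\in S$ there are $k$ pairwise arc-disjoint directed $r$-$s$ paths; it is minimally so if in addition deleting any arc destroys this property. $D$ is $3$-regular (with respect to $k$) if $r$ has in-degree $0$ and out-degree $k$, every terminal has in-degree $k$ and out-degree $0$, and every other vertex has in-degree plus out-degree $3$. *)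

(* Defs.v *)
From mathcomp Require Import all_boot.
Unset Printing Implicit Defensive.

(* A directed multigraph: vertex type V, arc type A (parallel arcs allowed),
   each arc a goes from [tl a] to [hd a]. *)

Section Digraph.
Variables (V A : finType) (tl hd : A -> V).

Definition loopless : Prop := forall a : A, tl a != hd a.

Definition indeg (v : V) : nat := #|[set a : A | hd a == v]|.
Definition outdeg (v : V) : nat := #|[set a : A | tl a == v]|.

Definition arc_next (a b : A) : bool := hd a == tl b.

Definition dpath (u v : V) (p : seq A) : Prop :=
  exists a0 p', p = a0 :: p' /\ tl a0 = u /\ path arc_next a0 p' /\
                hd (last a0 p') = v /\ uniq (u :: map hd p).

Definition dcycle (C : {set A}) : Prop :=
  exists a0 p', path arc_next a0 p' /\ arc_next (last a0 p') a0 /\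
                uniq (map tl (a0 :: p')) /\ C = [set a in a0 :: p'].

Definition disjoint_paths (k : nat) (F : {set A}) (u v : V) (P : 'I_k -> seq A) : Prop :=
  (forall i, dpath u v (P i)) /\
  (forall i, {subset P i <= F}) /\
  (forall i j, i != j -> forall a, a \in P i -> a \notin P j).

Definition steiner_conn (k : nat) (r : V) (S : {set V}) (F : {set A}) : Prop :=
  forall s, s \in S -> exists P : 'I_k -> seq A, disjoint_paths k F r s P.

Definition min_steiner_conn (k : nat) (r : V) (S : {set V}) : Prop :=
  steiner_conn k r S [set: A] /\
  forall a : A, ~ steiner_conn k r S ([set: A] :\ a).

Definition regular3 (k : nat) (r : V) (S : {set V}) : Prop :=
  indeg r = 0 /\ outdeg r = k /\
  (forall s, s \in S -> indeg s = k /\ outdeg s = 0) /\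
  (forall v, v != r -> v \notin S -> indeg v + outdeg v = 3).

Definition kpath_union (k : nat) (u v : V) (Q : {set A}) : Prop :=
  exists P : 'I_k -> seq A, disjoint_paths k [set: A] u v P /\
                            Q = \bigcup_(i < k) [set a in P i].

Definition min_kpath_union (k : nat) (u v : V) (Q : {set A}) : Prop :=
  kpath_union k u v Q /\
  forall Q' : {set A}, Q' \subset Q -> kpath_union k u v Q' -> Q' = Q.

End Digraph.

(* Main.v *)
Require Import Defs.
From mathcomp Require Import all_boot zify.
Set Implicit Arguments.
Unset Strict Implicit.

Definition degf {V A : finType} (f : A -> V) (F : {set A}) (v : V) : nat :=
  #|[set a in F | f a == v]|.

Lemma card_set_seq (A : finType) (p : seq A) (P : pred A) :
  uniq p -> #|[set a in p | P a]| = count P p.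
Proof.
move=> u; rewrite -size_filter.
have e : [set a in p | P a] =i filter P p by move=> a; rewrite inE mem_filter andbC.
by rewrite (eq_card e); apply/card_uniqP; rewrite filter_uniq.
Qed.

Lemma degf_seq (V A : finType) (f : A -> V) (p : seq A) v :
  uniq p -> degf f [set a in p] v = count_mem v (map f p).
Proof.
move=> u; rewrite /degf.
have -> : [set a in [set a in p] | f a == v] = [set a in p | f a == v].
  by apply/setP => a; rewrite !inE.
rewrite card_set_seq // count_map; apply: eq_count => a /=; by rewrite eq_sym.
Qed.

Lemma map_hd_path (V A : finType) (tl hd : A -> V) a0 p :
  path (arc_next V A tl hd) a0 p ->
  map hd (a0 :: p) = rcons (map tl p) (hd (last a0 p)).
Proof.
elim: p a0 => [|b q IH] a0 //= /andP [/eqP h pq].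
by rewrite -h -IH.
Qed.

Lemma degf_split (V A : finType) (f : A -> V) (F X : {set A}) v :
  X \subset F -> degf f F v = degf f (F :\: X) v + degf f X v.
Proof.
move=> sXF; rewrite /degf -(cardsID X [set a in F | f a == v]) addnC; congr (_ + _).
  by apply: eq_card => a; rewrite !inE; case: (a \in X).
apply: eq_card => a; rewrite !inE; case aX: (a \in X); last by rewrite andbF.
by rewrite (subsetP sXF a aX) andbT.
Qed.

Lemma degf_sum (V A : finType) (f : A -> V) (F : {set A}) v :
  degf f F v = \sum_(a in F) (f a == v).
Proof.
rewrite /degf -sum1_card big_mkcond /= [RHS]big_mkcond /=.
by apply: eq_bigr => a _; rewrite !inE; case: (a \in F); case: (f a == v).
Qed.

Lemma degf_bigcup (V A : finType) (k : nat) (f : A -> V) (X : 'I_k -> {set A}) v :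
  (forall i j, i != j -> [disjoint X i & X j]) ->
  degf f (\bigcup_(i < k) X i) v = \sum_(i < k) degf f (X i) v.
Proof.
move=> dis; rewrite degf_sum (partition_disjoint_bigcup _ _ dis).
by apply: eq_bigr => i _; rewrite degf_sum.
Qed.

Lemma dpath_uniq (V A : finType) (tl hd : A -> V) u w p :
  dpath V A tl hd u w p -> uniq p.
Proof.
move=> [a0 [p' [-> [_ [_ [_ U]]]]]].
exact: map_uniq (subseq_uniq (subseq_cons _ _) U).
Qed.

Lemma dpath_bal (V A : finType) (tl hd : A -> V) u w p :
  dpath V A tl hd u w p -> forall v,
  degf tl [set a in p] v + (v == w) = degf hd [set a in p] v + (v == u).
Proof.
move=> H v; have U := dpath_uniq H.
move: H => [a0 [p' [Ep [Htl [Hp [Hl _]]]]]].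
rewrite !degf_seq // Ep (map_hd_path Hp) Hl /= -cats1 count_cat /= Htl.
rewrite [w == v]eq_sym [u == v]eq_sym.
case: (v == u); case: (v == w); rewrite /=; lia.
Qed.

Lemma dcycle_bal (V A : finType) (tl hd : A -> V) C :
  dcycle V A tl hd C -> forall v, degf tl C v = degf hd C v.
Proof.
move=> [a0 [p' [Hp [Hc [U ->]]]]] v.
have U' : uniq (a0 :: p') by exact: map_uniq U.
rewrite !degf_seq // (map_hd_path Hp) /= -cats1 count_cat /=.
move: Hc; rewrite /arc_next => /eqP ->; lia.
Qed.

Lemma degf_sumset (V A : finType) (f : A -> V) (F : {set A}) (R : {set V}) :
  \sum_(v in R) degf f F v = #|[set a in F | f a \in R]|.
Proof.
under eq_bigr do rewrite degf_sum.
rewrite exchange_big /= -sum1_card big_mkcond /= [RHS]big_mkcond /=.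
apply: eq_bigr => a _; rewrite !inE; case: (a \in F) => //=.
case fR: (f a \in R).
  rewrite (bigD1 (f a)) //= eqxx big1 // => v /andP [_ nv]; by rewrite eq_sym (negbTE nv).
by rewrite big1 // => v vR; case: eqP => // E; rewrite -E fR in vR.
Qed.

Lemma lift_path (V A : finType) (tl hd : A -> V) (F : {set A}) u vp :
  path [rel x y | [exists a in F, (tl a == x) && (hd a == y)]] u vp -> vp != [::] ->
  exists a0 p', map hd (a0 :: p') = vp /\ tl a0 = u /\
     path (arc_next V A tl hd) a0 p' /\ all (fun a => a \in F) (a0 :: p').
Proof.
elim: vp u => [|v vp IH] u //= /andP [/existsP [a /and3P [aF /eqP ta /eqP ha]] Hp] _.
case: vp IH Hp => [|w vp] IH Hp.
  by exists a, [::]; rewrite /= ha ta aF.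
have [b0 [q [Em [tb [Hq Aq]]]]] := IH v Hp isT.
exists a, (b0 :: q); split; first by rewrite /= ha -Em.
split=> //; split; last by rewrite /= aF.
by rewrite /= /arc_next ha tb eqxx Hq.
Qed.

Lemma find_path (V A : finType) (tl hd : A -> V) (k : nat) (F : {set A}) (r s : V) :
  r != s -> 0 < k ->
  (forall v, degf tl F v + k * (v == s) = degf hd F v + k * (v == r)) ->
  exists p, dpath V A tl hd r s p /\ {subset p <= F}.
Proof.
move=> rs k0 bal.
set e := [rel x y | [exists a in F, (tl a == x) && (hd a == y)]].
have crs : connect e r s.
  case: (boolP (connect e r s)) => // ns.
  set R := [set v | connect e r v].
  have rR : r \in R by rewrite inE connect0.
  have sR : s \notin R by rewrite inE.
  have H : \sum_(v in R) (degf tl F v + k * (v == s)) =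
           \sum_(v in R) (degf hd F v + k * (v == r)) by apply: eq_bigr => v _; apply: bal.
  rewrite !big_split /= !degf_sumset in H.
  rewrite (@big1 _ _ _ _ _ _ (fun v => k * (v == s))) in H; last first.
    move=> v vR; have : v != s by apply: contraNneq sR => <-.
    by move/negbTE ->; rewrite muln0.
  rewrite (bigD1 r) //= eqxx big1 in H; last first.
    by move=> v /andP [_ /negbTE ->]; rewrite muln0.
  have sub : [set a in F | tl a \in R] \subset [set a in F | hd a \in R].
    apply/subsetP => a; rewrite !inE => /andP [aF ta]; rewrite aF /=.
    apply: connect_trans ta (connect1 _); apply/existsP; exists a; by rewrite aF !eqxx.
  have := subset_leq_card sub; lia.
case/connectP: crs => vp0 Hp0 Es.
case: (shortenP Hp0) Es => vp Hp U _ Es.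
have vpn : vp != [::] by case: vp Es {Hp U} => //= E; rewrite E eqxx in rs.
have [a0 [p' [Em [ta [Hq Aq]]]]] := lift_path Hp vpn.
exists (a0 :: p'); split.
  exists a0, p'; split=> //; split=> //; split=> //; split.
    by rewrite Es -Em /= last_map.
  by rewrite Em.
by move=> a /(allP Aq).
Qed.

Lemma decomp (V A : finType) (tl hd : A -> V) (k : nat) : forall (F : {set A}) (r s : V),
  r != s ->
  (forall v, degf tl F v + k * (v == s) = degf hd F v + k * (v == r)) ->
  exists P : 'I_k -> seq A, disjoint_paths V A tl hd k F r s P.
Proof.
elim: k => [|k IH] F r s rs bal.
  by exists (fun _ => [::]); split; [case | split; case].
have [p [dp pF]] := find_path rs (ltn0Sn k) bal.
have sub : [set a in p] \subset F by apply/subsetP => a; rewrite inE; apply: pF.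
have bal' : forall v, degf tl (F :\: [set a in p]) v + k * (v == s) =
                      degf hd (F :\: [set a in p]) v + k * (v == r).
  move=> v; have := bal v; have := dpath_bal dp v.
  rewrite (degf_split tl _ sub) (degf_split hd _ sub).
  case: (v == s); case: (v == r); rewrite /=; lia.
have [P' [dP' [sP' jP']]] := IH _ _ _ rs bal'.
have nP : forall j a, a \in P' j -> a \notin p.
  by move=> j a /sP'; rewrite !inE => /andP [].
exists (fun i => oapp P' p (unlift ord0 i)); split; [|split].
- by move=> i; case: unliftP => [j|] _ /=.
- move=> i; case: unliftP => [j|] _ /= a; last exact: pF.
  by move/sP'; rewrite !inE => /andP [].
- move=> i j; case: unliftP => [i1|] -> ; case: unliftP => [j1|] -> //= ij a.
  + by apply: jP'; apply: contraNneq ij => ->.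
  + by move/nP.
  + by move=> ap; apply/negP => /nP; rewrite ap.
Qed.

Theorem lemma2p8 (V A : finType) (tl hd : A -> V) (k : nat) (r : V) (S : {set V})
  (Hloop : loopless V A tl hd) (HrS : r \notin S)
  (Hmin : min_steiner_conn V A tl hd k r S) (Hreg : regular3 V A tl hd k r S)
  (C : {set A}) (HC : dcycle V A tl hd C)
  (Q : V -> {set A}) (HQ : forall s, s \in S -> min_kpath_union V A tl hd k r s (Q s)) :
  C \subset \bigcup_(s in S) Q s /\ (forall s, s \in S -> C :\: Q s != set0).
Proof.
split.
  apply/subsetP => a aC; apply/negPn/negP => na.
  apply: (proj2 Hmin a) => s sS.
  have [[P [[dP [sP jP]] EQ]] _] := HQ s sS.
  exists P; split=> //; split=> // i x xP.
  rewrite !inE andbT; apply/negP => /eqP xa; move/negP: na; apply.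
  apply/bigcupP; exists s => //; rewrite EQ; apply/bigcupP; exists i => //.
  by rewrite inE -xa.
move=> s sS; apply/negP; rewrite setD_eq0 => CQ.
have [[P [[dP [sP jP]] EQ]] minQ] := HQ s sS.
have rs : r != s by apply: contraNneq HrS => ->.
set F := Q s :\: C.
have disP : forall i j : 'I_k, i != j -> [disjoint [set a in P i] & [set a in P j]].
  move=> i j ij; rewrite -setI_eq0; apply/eqP/setP => x; rewrite !inE.
  by case xi: (x \in P i) => //=; apply/negbTE; exact: jP ij x xi.
have balQ : forall v, degf tl (Q s) v + k * (v == s) = degf hd (Q s) v + k * (v == r).
  move=> v; rewrite EQ !degf_bigcup //.
  have H : \sum_(i < k) (degf tl [set a in P i] v + (v == s)) =
           \sum_(i < k) (degf hd [set a in P i] v + (v == r)).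
    by apply: eq_bigr => i _; exact: dpath_bal (dP i) v.
  move: H; rewrite !big_split /= !sum_nat_const card_ord => ->.
  by [].
have balF : forall v, degf tl F v + k * (v == s) = degf hd F v + k * (v == r).
  move=> v; have := balQ v; have := dcycle_bal HC v.
  rewrite (degf_split tl _ CQ) (degf_split hd _ CQ) -/F.
  case: (v == s); case: (v == r); rewrite /=; lia.
have [P' [dP' [sP' jP']]] := decomp rs balF.
set Q' := \bigcup_(i < k) [set a in P' i].
have Q'F : Q' \subset F.
  apply/subsetP => x /bigcupP [i _]; rewrite inE; exact: sP'.
have FQ : F \subset Q s by apply: subsetDl.
have EQ' := minQ Q' (subset_trans Q'F FQ).
have : Q' = Q s.
  apply: EQ'; exists P'; split=> //; split=> //; split=> // i x _; exact: in_setT.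
move=> E; move: HC => [a0 [p' [_ [_ [_ EC]]]]].
have a0C : a0 \in C by rewrite EC inE mem_head.
have := subsetP Q'F a0; rewrite E (subsetP CQ a0 a0C) => /(_ isT).
by rewrite inE a0C.
Qed.
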